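(* Let $N\ge2$ and let $W:[0,\infty)\to(0,\infty)$ be such that $x\mapsto W(|x|)$ is in $C^2(\mathbb{R}^N)$, $W$ is non-decreasing and log-convex. Let $F\in C^2[0,+\infty)$ satisfy $F(0)=0<F(r)$ for $r>0$ and $$F''+\frac{W'}{W}F'+(N-1)\frac{F'}{r}=(N-1)\frac{F}{r^2}\quad\text{on }(0,+\infty).$$ Then for all $r>0$, $$\Big((F')^2+\frac{N-1}{r^2}F^2\Big)'\le0\qquad\text{and}\qquad\Big(\frac{N-1}{r}F^2+2FF'+\frac{W'}{W}F^2\Big)'\ge0.$$
   Context: This $F$ is the radial profile of the first nontrivial Steklov eigenfunctions $u_i(x)=\frac{x_i}{|x|}F(|x|)$, $i=1,\dots,N$, of $\nabla\cdot(W(|x|)\nabla u)=0$ in a ball centered at the origin with $\partial u/\partial\nu=\gamma u$ on its boundary. *)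

(* Defs.v *)
From HB Require Import structures.
From mathcomp Require Import all_boot all_order all_algebra.
From mathcomp Require Import all_classical all_reals all_analysis.
Set Implicit Arguments. Unset Strict Implicit. Unset Printing Implicit Defensive.
Import Order.TTheory GRing.Theory Num.Theory.
Import numFieldNormedType.Exports.
Local Open Scope classical_set_scope.
Local Open Scope ring_scope.

Definition eucl_norm (R : realType) (N : nat) (x : 'rV[R]_N) : R :=
  Num.sqrt (\sum_(i < N) x ord0 i ^+ 2).

Definition C2_Rn (R : realType) (N : nat) (f : 'rV[R]_N -> R) : Prop :=
  continuous f /\
  forall u v : 'rV[R]_N,
    (forall x, derivable f x u) /\
    (forall x, derivable ('D_u f) x v) /\
    continuous ('D_u f) /\ continuous ('D_v ('D_u f)).

(* F is of class C^2 on [0, +oo): twice differentiable on (0,+oo), with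
   F, F', F'' continuous on (0,+oo) and extending continuously to 0
   (F continuous from the right at 0, F' and F'' having right limits at 0),
   i.e. one-sided C^2 up to the boundary point 0. *)
Definition C2_nonneg (R : realType) (F : R -> R) : Prop :=
  (forall r, 0 < r -> derivable F r 1 /\ derivable (derive1 F) r 1) /\
  {in `]0, +oo[, continuous (derive1n 2 F)} /\
  F @ at_right 0 --> F 0 /\
  cvg (derive1 F @ at_right 0) /\
  cvg (derive1n 2 F @ at_right 0).

Definition nondecr_nonneg (R : realType) (W : R -> R) : Prop :=
  forall x y : R, 0 <= x -> x <= y -> W x <= W y.

Definition logconvex_nonneg (R : realType) (W : R -> R) : Prop :=
  forall x y t : R, 0 <= x -> 0 <= y -> 0 <= t <= 1 ->
    ln (W (t * x + (1 - t) * y)) <= t * ln (W x) + (1 - t) * ln (W y).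

(* Main.v *)
Require Import Defs.
From HB Require Import structures.
From mathcomp Require Import all_boot all_order all_algebra.
From mathcomp Require Import all_classical all_reals all_analysis.
From mathcomp Require Import ring lra.
Import Order.TTheory GRing.Theory Num.Theory.
Import numFieldNormedType.Exports.
Local Open Scope classical_set_scope.
Local Open Scope ring_scope.

Section S.
Variable R : realType.

Lemma transfer N (f : 'rV[R]_N -> R) (e : 'rV[R]_N) (a : R) :
  derivable f (a *: e) e ->
  derivable (fun s : R => f (s *: e)) a 1 /\
  'D_1 (fun s : R => f (s *: e)) a = 'D_e f (a *: e).
Proof.
have E : (fun h : R => h^-1 *: (((fun s : R => f (s *: e)) \o shift a) (h *: 1) - f (a *: e)))
  = (fun h => h^-1 *: ((f \o shift (a *: e)) (h *: e) - f (a *: e))).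
  by apply/funext => h /=; rewrite scalerDl -[h *: 1]/(h * 1) mulr1.
by rewrite /derivable /derive E; split.
Qed.

Definition e0 N : 'rV[R]_N := \row_(i < N) (if val i == 0%N then 1 else 0).

Lemma norm_e0 N (s : R) : (0 < N)%N -> eucl_norm (s *: e0 N) = `|s|.
Proof.
move=> N0; rewrite /eucl_norm (bigD1 (Ordinal N0)) //= big1.
  by rewrite !mxE /= mulr1 addr0 sqrtr_sqr.
move=> i /eqP ne; rewrite !mxE; case: eqP => [h|]; last by rewrite mulr0 expr0n.
by exfalso; apply: ne; apply: val_inj.
Qed.

Lemma ndecr_ge0 (f : R -> R) x : 0 < x -> derivable f x 1 ->
  (forall y z, 0 < y -> y <= z -> f y <= f z) -> 0 <= derive1 f x.
Proof.
move=> x0 df incr.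
apply: limr_ge.
  under eq_fun; first (move=> h; rewrite -{2}(scaler1 h); over).
  exact: df.
near=> h.
have h0 : h != 0%R by near: h; exact: nbhs_dnbhs_neq.
have hx : `|h| < x by near: h; apply: dnbhs0_lt.
move: h0; rewrite neq_lt => /orP[h0|h0].
- rewrite -[h^-1 *: _]/(h^-1 * _) nmulr_rge0 ?invr_lt0// subr_le0 incr //.
    by rewrite ltr0_norm // in hx; lra.
  by lra.
- rewrite -[h^-1 *: _]/(h^-1 * _) pmulr_rge0 ?invr_gt0// subr_ge0 incr //.
  by lra.
Unshelve. all: end_near. Qed.

Lemma dnbhs_right (f : R -> R) (l : R) : f h @[h --> 0^'] --> l -> f h @[h --> (0:R)^'+] --> l.
Proof.
move=> fl; apply: (cvg_trans _ fl); move=> P /=; rewrite !nbhs_simpl /=.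
rewrite /at_right /dnbhs /within /=.
apply: filterS => y Py y0; apply: Py; exact: lt0r_neq0.
Qed.
Lemma dnbhs_left (f : R -> R) (l : R) : f h @[h --> 0^'] --> l -> f h @[h --> (0:R)^'-] --> l.
Proof.
move=> fl; apply: (cvg_trans _ fl); move=> P /=; rewrite !nbhs_simpl /=.
rewrite /at_left /dnbhs /within /=.
apply: filterS => y Py y0; apply: Py; exact: ltr0_neq0.
Qed.
Definition conv (phi : R -> R) := forall a b t : R, 0 <= a -> 0 <= b -> 0 <= t <= 1 ->
  phi (t * a + (1 - t) * b) <= t * phi a + (1 - t) * phi b.

Lemma der_cvg (phi : R -> R) x : derivable phi x 1 ->
  (fun h => h^-1 * (phi (h + x) - phi x)) h @[h --> 0^'] --> derive1 phi x.
Proof.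
have E : (fun h : R => h^-1 *: ((phi \o shift x) (h *: 1) - phi x)) =
   (fun h => h^-1 * (phi (h + x) - phi x)).
  by apply/funext => h /=; rewrite -[h *: 1]/(h * 1) mulr1.
by rewrite derive1E /derivable /derive E.
Qed.

Lemma slope_right (phi : R -> R) x y : 0 < x -> x < y -> derivable phi x 1 ->
  conv phi -> derive1 phi x <= (phi y - phi x) / (y - x).
Proof.
move=> x0 xy df cv.
have cq := @dnbhs_right _ _ (@der_cvg phi _ df).
rewrite -(cvg_lim _ cq) //; apply: limr_le; first exact: cvgP cq.
near=> h.
have h0 : 0 < h by near: h; exact: nbhs_right_gt.
have hd : h < y - x by near: h; apply: nbhs_right_lt; lra.
have d0 : 0 < y - x by lra.
have t0 : 0 <= h / (y - x) by apply: divr_ge0; apply: ltW.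
have t1 : h / (y - x) <= 1 by rewrite ler_pdivrMr //; lra.
have := cv x y (1 - h / (y - x)) (ltW x0) (ltW (lt_trans x0 xy)).
have -> : (1 - h / (y - x)) * x + (1 - (1 - h / (y - x))) * y = h + x.
  by field; apply/eqP; lra.
have -> : (1 - h / (y - x)) * phi x + (1 - (1 - h / (y - x))) * phi y = phi x + h / (y - x) * (phi y - phi x).
  by ring.
move=> /(_ ltac:(apply/andP; split; lra)) hu.
have hu' : phi (h + x) - phi x <= h / (y - x) * (phi y - phi x) by lra.
have hi : 0 <= h^-1 by rewrite invr_ge0 ltW.
apply: le_trans (ler_wpM2l hi hu') _.
have -> : h^-1 * (h / (y - x) * (phi y - phi x)) = (phi y - phi x) / (y - x) by field; apply/andP; split; apply/eqP; lra.
by [].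
Unshelve. all: end_near. Qed.

Lemma slope_left (phi : R -> R) x y : 0 < x -> x < y -> derivable phi y 1 ->
  conv phi -> (phi y - phi x) / (y - x) <= derive1 phi y.
Proof.
move=> x0 xy df cv.
have cq := @dnbhs_left _ _ (@der_cvg phi _ df).
rewrite -(cvg_lim _ cq) //; apply: limr_ge; first exact: cvgP cq.
near=> h.
have h0 : h < 0 by near: h; exact: nbhs_left_lt.
have hd : - (y - x) < h by near: h; apply: nbhs_left_gt; lra.
have d0 : 0 < y - x by lra.
have t0 : 0 <= - h / (y - x) by apply: divr_ge0; lra.
have t1 : - h / (y - x) <= 1 by rewrite ler_pdivrMr //; lra.
have := cv x y (- h / (y - x)) (ltW x0) (ltW (lt_trans x0 xy)).
have -> : (- h / (y - x)) * x + (1 - (- h / (y - x))) * y = h + y.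
  by field; apply/eqP; lra.
have -> : (- h / (y - x)) * phi x + (1 - (- h / (y - x))) * phi y = phi y + h / (y - x) * (phi y - phi x).
  by ring.
move=> /(_ ltac:(apply/andP; split; lra)) hu.
have hu' : phi (h + y) - phi y <= h / (y - x) * (phi y - phi x) by lra.
have hi : h^-1 <= 0 by rewrite invr_le0 ltW.
apply: le_trans _ (ler_wnM2l hi hu').
have -> : h^-1 * (h / (y - x) * (phi y - phi x)) = (phi y - phi x) / (y - x) by field; apply/andP; split; apply/eqP; lra.
by [].
Unshelve. all: end_near. Qed.
Lemma DD (f g : R -> R) (x a b : R) : is_derive x 1 f a -> is_derive x 1 g b ->
  is_derive x 1 (fun s => f s + g s) (a + b).
Proof. move=> hf hg; exact: is_deriveD. Qed.
Arguments DD {f g x a b}.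
Lemma DM (f g : R -> R) (x a b : R) : is_derive x 1 f a -> is_derive x 1 g b ->
  is_derive x 1 (fun s => f s * g s) (f x * b + g x * a).
Proof. move=> hf hg; exact: is_deriveM. Qed.
Arguments DM {f g x a b}.
Lemma DV (f : R -> R) (x a : R) : f x != 0 -> is_derive x 1 f a ->
  is_derive x 1 (fun s => (f s)^-1) (- a / (f x) ^+ 2).
Proof.
move=> h hf; case: (is_deriveV h hf) => d1 d2; split; first exact: d1.
by rewrite d2 -[_ *: _]/(_ * _) mulNr mulrC mulNr.
Qed.
Arguments DV {f x a}.
Lemma DX2 (f : R -> R) (x a : R) : is_derive x 1 f a ->
  is_derive x 1 (fun s => f s ^+ 2) (2 * f x * a).
Proof.
move=> hf; case: (DM hf hf) => d1 d2; split.
  exact: d1.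
rewrite (_ : 2 * f x * a = f x * a + f x * a); last by ring.
exact: d2.
Qed.
Lemma Did (x : R) : is_derive x 1 (fun s : R => s) 1.
Proof. exact: is_derive_id. Qed.
Lemma Dcst (x c : R) : is_derive x 1 (fun s : R => c) 0.
Proof. exact: is_derive_cst. Qed.
Arguments DX2 {f x a}.
Lemma alg1 (x y z w V n t : R) : 0 < t -> 0 <= w -> 0 < V -> 0 <= n ->
  z + w / V * y + n * y / t = n * x / t ^+ 2 ->
  2 * y * z + (n / t ^+ 2 * (2 * x * y) + x ^+ 2 * (n * (- (2 * t * 1) / t ^+ 2 ^+ 2) + t ^- 2 * 0)) <= 0.
Proof.
move=> t0 w0 V0 n0 ode.
have key : z + w / V * y + n * y / t - n * x / t ^+ 2 = 0 by rewrite ode subrr.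
have E : 2 * y * z + (n / t ^+ 2 * (2 * x * y) + x ^+ 2 * (n * (- (2 * t * 1) / t ^+ 2 ^+ 2) + t ^- 2 * 0))
  = -(2 * n / t * (y - x / t) ^+ 2) - 2 * (w / V * y ^+ 2)
   + 2 * y * (z + w / V * y + n * y / t - n * x / t ^+ 2).
  by field; rewrite (lt0r_neq0 t0) (lt0r_neq0 V0).
rewrite E key mulr0 addr0.
have p1 : 0 <= 2 * n / t * (y - x / t) ^+ 2.
  apply: mulr_ge0; last exact: sqr_ge0.
  apply: divr_ge0; last exact: ltW.
  apply: mulr_ge0 => //; lra.
have p2 : 0 <= w / V * y ^+ 2.
  apply: mulr_ge0; last exact: sqr_ge0.
  by apply: divr_ge0 => //; exact: ltW.
lra.
Qed.
Lemma alg2 (x y z w V n t ap : R) : 0 < t -> 0 < V -> 0 <= n -> 0 <= ap ->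
  z + w / V * y + n * y / t = n * x / t ^+ 2 ->
  0 <= n / t * (2 * x * y) + x ^+ 2 * (n * (-1 / t ^+ 2) + t^-1 * 0) +
   (2 * x * z + y * (2 * y + x * 0)) + (w / V * (2 * x * y) + x ^+ 2 * ap).
Proof.
move=> t0 V0 n0 a0 ode.
have key : z + w / V * y + n * y / t - n * x / t ^+ 2 = 0 by rewrite ode subrr.
have E : n / t * (2 * x * y) + x ^+ 2 * (n * (-1 / t ^+ 2) + t^-1 * 0) +
   (2 * x * z + y * (2 * y + x * 0)) + (w / V * (2 * x * y) + x ^+ 2 * ap)
  = n * x ^+ 2 / t ^+ 2 + 2 * y ^+ 2 + ap * x ^+ 2
   + 2 * x * (z + w / V * y + n * y / t - n * x / t ^+ 2).
  by field; rewrite (lt0r_neq0 t0) (lt0r_neq0 V0).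
rewrite E key mulr0 addr0.
have p1 : 0 <= n * x ^+ 2 / t ^+ 2.
  apply: divr_ge0; last exact: sqr_ge0.
  by apply: mulr_ge0 => //; exact: sqr_ge0.
have p2 : 0 <= ap * x ^+ 2 by apply: mulr_ge0 => //; exact: sqr_ge0.
have p3 : 0 <= y ^+ 2 by exact: sqr_ge0.
lra.
Qed.
End S.
Arguments DD {R f g x a b}.
Arguments DM {R f g x a b}.
Arguments DV {R f x a}.
Arguments DX2 {R f x a}.

Theorem lemma3p3 (R : realType) (N : nat) (W F : R -> R) :
  (2 <= N)%N ->
  (forall r, 0 <= r -> 0 < W r) ->
  C2_Rn (fun x : 'rV[R]_N => W (eucl_norm x)) ->
  nondecr_nonneg W ->
  logconvex_nonneg W ->
  C2_nonneg F ->
  F 0 = 0 ->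
  (forall r, 0 < r -> 0 < F r) ->
  (forall r, 0 < r ->
     derive1n 2 F r + derive1 W r / W r * derive1 F r + (N - 1)%:R * derive1 F r / r
     = (N - 1)%:R * F r / r ^+ 2) ->
  forall r, 0 < r ->
    derive1 (fun s => derive1 F s ^+ 2 + (N - 1)%:R / s ^+ 2 * F s ^+ 2) r
      <= 0 /\
    0 <= derive1 (fun s => (N - 1)%:R / s * F s ^+ 2
                            + 2 * F s * derive1 F s
                            + derive1 W s / W s * F s ^+ 2) r.
Proof.
move=> N2 Wpos [_ HC2] Wincr Wlc [HF _] _ _ ode r r0.
have N0 : (0 < N)%N by apply: leq_trans N2.
set f := fun x : 'rV[R]_N => W (eucl_norm x).
set e := e0 R N.
have WD : forall s, 0 < s -> derivable W s 1 /\ 'D_1 W s = 'D_e f (s *: e).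
  move=> s s0.
  have [d1 d2] := @transfer R N f e s ((HC2 e e).1 (s *: e)).
  have nE : \forall t \near s, (fun t : R => f (t *: e)) t = W t.
    near=> t; rewrite /f /e norm_e0 // gtr0_norm //.
    by near: t; exact: lt_nbhsr.
  split; first exact: near_eq_derivable nE d1.
  by rewrite -(near_eq_derive _ nE).
have W1D : forall s, 0 < s -> derivable (derive1 W) s 1.
  move=> s s0.
  have [d1 _] := @transfer R N ('D_e f) e s ((HC2 e e).2.1 (s *: e)).
  have nE : \forall t \near s, (fun t : R => 'D_e f (t *: e)) t = derive1 W t.
    near=> t; rewrite derive1E (WD t _).2 //.
    by near: t; exact: lt_nbhsr.
  exact: near_eq_derivable nE d1.
have W1ge : forall s, 0 < s -> 0 <= derive1 W s.
  move=> s s0; apply: (@ndecr_ge0 R W s s0 (WD s s0).1).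
  by move=> y z y0 yz; apply: Wincr => //; exact: ltW.
have hW : forall s : R, 0 < s -> is_derive s 1 W (derive1 W s).
  by move=> s s0; rewrite derive1E; apply: derivableP; exact: (WD s s0).1.
have hW1 : forall s : R, 0 < s -> is_derive s 1 (derive1 W) (derive1 (derive1 W) s).
  by move=> s s0; rewrite [X in is_derive _ _ _ X]derive1E; apply: derivableP; exact: W1D.
have dphi : forall s : R, 0 < s ->
    is_derive s 1 (fun t => ln (W t)) (derive1 W s / W s).
  move=> s s0.
  case: (is_derive1_comp (is_derive1_ln (Wpos s (ltW s0))) (hW s s0)) => d1 d2.
  by split; [exact: d1 | rewrite d2 mulrC].
have cphi : @conv R (fun t : R => ln (W t)) by move=> a b t a0 b0 t01; exact: Wlc.
have Amono : forall x y : R, 0 < x -> x <= y ->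
    derive1 W x / W x <= derive1 W y / W y.
  move=> x y x0; rewrite le_eqVlt => /orP[/eqP -> //|xy].
  have y0 : 0 < y by apply: lt_trans xy.
  case: (dphi x x0) => dx vx; case: (dphi y y0) => dy vy.
  rewrite -vx -vy -!derive1E.
  apply: le_trans (@slope_right R _ x y x0 xy dx cphi) _.
  exact: (@slope_left R _ x y x0 xy dy cphi).
have Wr0 : W r != 0 by apply: lt0r_neq0; apply: Wpos; exact: ltW.
have dA := DM (hW1 r r0) (DV Wr0 (hW r r0)).
have ap0 : 0 <= derive1 W r * (- derive1 W r / W r ^+ 2) + (W r)^-1 * derive1 (derive1 W) r.
  case: dA => dA1 dA2.
  have := @ndecr_ge0 R (fun s => derive1 W s / W s) r r0 dA1 Amono.
  by rewrite derive1E dA2.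
have hF : is_derive r 1 F (derive1 F r).
  by rewrite derive1E; apply: derivableP; exact: (HF r r0).1.
have hF1 : is_derive r 1 (derive1 F) (derive1n 2 F r).
  by rewrite /= [X in is_derive _ _ _ X]derive1E; apply: derivableP; exact: (HF r r0).2.
have r2 : r ^+ 2 != 0 by rewrite expf_neq0 // lt0r_neq0.
have r1 : r != 0 by rewrite lt0r_neq0.
have D1 := DD (DX2 hF1) (DM (DM (@Dcst R r (N - 1)%:R) (DV (f:=fun s : R => s ^+ 2) (x:=r) r2 (DX2 (@Did R r)))) (DX2 hF)).
have D2 := DD (DD (DM (DM (@Dcst R r (N - 1)%:R) (DV (f:=fun s : R => s) (x:=r) r1 (@Did R r))) (DX2 hF)) (DM (DM (@Dcst R r 2) hF) hF1)) (DM dA (DX2 hF)).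
split.
  rewrite derive1E; case: D1 => _ ->.
  exact: (@alg1 R _ _ _ _ _ _ _ r0 (W1ge r r0) (Wpos r (ltW r0)) (ler0n _ _) (ode r r0)).
rewrite derive1E; case: D2 => _ ->.
exact: (@alg2 R _ _ _ _ _ _ _ _ r0 (Wpos r (ltW r0)) (ler0n _ _) ap0 (ode r r0)).
Unshelve. all: end_near. Qed.
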